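(* Let $r$ be a request whose underlying undirected graph of $G_r$ is a tree, and let $(x_r,\vec y_r,\vec z_r,\vec a_r)$ be a feasible solution of the LP relaxation of the multi-commodity flow formulation. Then the solution can be decomposed into a finite family $\mathcal D_r=\{(f^k_r,m^k_r)\}_k$ with weights $f^k_r>0$ and valid mappings $m^k_r\in\mathcal M_r$ such that (i) $x_r=\sum_kf^k_r$ and (ii) $a^{x,y}_r\ge\sum_kf^k_rA(m^k_r,x,y)$ for every resource $(x,y)\in R_S$.
   Context: Substrate: directed graph $G_S=(V_S,E_S)$, node types $\mathcal T$, $V_S^\tau\subseteq V_S$, node resources $R^V_S=\{(\tau,u):u\in V_S^\tau\}$, resources $R_S=R^V_S\cup E_S$, capacities $d_S(x,y)>0$. Request $r$: directed graph $G_r=(V_r,E_r)$, types $\tau_r$, demands $d_r(i),d_r(i,j)\ge0$, allowed node sets $V_S^{r,i}\subseteq V_S^{\tau_r(i)}$, allowed edge sets $E_S^{r,i,j}\subseteq E_S$. A valid mapping $m_r=(m^V_r,m^E_r)$: $m^V_r(i)\in V_S^{r,i}$; $m^E_r(i,j)$ the edge set of a directed path from $m^V_r(i)$ to $m^V_r(j)$ in $E_S^{r,i,j}$ (empty iff endpoints coincide); $\mathcal M_r$ the set of valid mappings; allocations $A(m_r,\tau,u)=\sum_{i:\tau_r(i)=\tau,m^V_r(i)=u}d_r(i)$, $A(m_r,u,v)=\sum_{(i,j):(u,v)\in m^E_r(i,j)}d_r(i,j)$. LP relaxation of the MCF formulation: variables $x_r\in[0,1]$, $y^u_{r,i}\in[0,1]$,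 $z^{u,v}_{r,i,j}\in[0,1]$, $a^{x,y}_r\ge 0$, constraints $\sum_{u\in V_S^{r,i}}y^u_{r,i}=x_r$ for all $i$; $y^u_{r,i}=0$ for $u\notin V_S^{r,i}$; $\sum_{(u,v)\in E_S}z^{u,v}_{r,i,j}-\sum_{(v,u)\in E_S}z^{v,u}_{r,i,j}=y^u_{r,i}-y^u_{r,j}$ for all $(i,j)\in E_r,u\in V_S$; $z^{u,v}_{r,i,j}=0$ for $(u,v)\notin E_S^{r,i,j}$; $a^{u,v}_r=\sum_{(i,j)}d_r(i,j)z^{u,v}_{r,i,j}$; $a^{\tau,u}_r=\sum_{i:\tau_r(i)=\tau}d_r(i)y^u_{r,i}$; $\sum_ra^{x,y}_r\le d_S(x,y)$. *)

(* Defs.v *)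
From mathcomp Require Import all_boot all_order all_algebra.
Set Implicit Arguments. Unset Strict Implicit. Unset Printing Implicit Defensive.
Import Order.TTheory GRing.Theory Num.Theory.
Local Open Scope ring_scope.

(* Substrate: finite vertex type VS, directed edge relation ES : rel VS,
   node types T, typed node sets VSt : T -> {set VS}.
   Request: finite node type VR, directed edge relation ER : rel VR,
   types typ : VR -> T, allowed node sets Vallow, allowed edge sets Eallow. *)

Section Tree.
Variables (VR : finType) (ER : rel VR).

Definition undirected : rel VR := fun i j => ER i j || ER j i.

Definition undirected_minus (a b : VR) : rel VR := fun i j =>
  (ER i j && ((i, j) != (a, b))) || (ER j i && ((j, i) != (a, b))).

(* the underlying undirected graph is a tree: nonempty, connected, and
   acyclic (every edge is a bridge: removing it disconnects its endpoints;
   this also excludes self-loops and antiparallel pairs). *)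
Definition underlying_tree : Prop :=
  [/\ (0 < #|VR|)%N,
      (forall i j, connect undirected i j) &
      (forall a b, ER a b -> ~~ connect (undirected_minus a b) a b)].
End Tree.

Section Mappings.
Variables (VS VR T : finType) (ER : rel VR).
Variables (Vallow : VR -> {set VS}) (Eallow : VR -> VR -> rel VS).

Record mapping := Mapping {
  mV : VR -> VS;
  mE : VR -> VR -> {set VS * VS} }.

Definition path_edges (u : VS) (p : seq VS) : {set VS * VS} :=
  [set e in zip (u :: p) p].

Definition valid_mapping (m : mapping) : Prop :=
  [/\ (forall i, mV m i \in Vallow i),
      (forall i j, ER i j -> exists p : seq VS,
          [/\ path (Eallow i j) (mV m i) p,
              last (mV m i) p = mV m j,
              uniq (mV m i :: p) &
              mE m i j = path_edges (mV m i) p]) &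
      (forall i j, ER i j -> (mE m i j == set0) = (mV m i == mV m j))].

Variables (R : numDomainType) (typ : VR -> T)
          (dn : VR -> R) (de : VR -> VR -> R).

Definition alloc_node (m : mapping) (tau : T) (u : VS) : R :=
  \sum_(i | (typ i == tau) && (mV m i == u)) dn i.

Definition alloc_edge (m : mapping) (u v : VS) : R :=
  \sum_(p : VR * VR | ER p.1 p.2 && ((u, v) \in mE m p.1 p.2)) de p.1 p.2.
End Mappings.

Section LP.
Variables (R : numDomainType) (VS VR T : finType) (ES : rel VS)
          (VSt : T -> {set VS}) (ER : rel VR) (typ : VR -> T)
          (dn : VR -> R) (de : VR -> VR -> R)
          (Vallow : VR -> {set VS}) (Eallow : VR -> VR -> rel VS).

(* Feasibility of (x, y, z, a) for the constraints of the LP relaxation of the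
   MCF formulation that concern request r. z i j u v is z^{u,v}_{r,i,j};
   an tau u is a^{tau,u}_r, ae u v is a^{u,v}_r. *)
Definition lp_feasible (x : R) (y : VR -> VS -> R) (z : VR -> VR -> VS -> VS -> R)
    (an : T -> VS -> R) (ae : VS -> VS -> R) : Prop :=
  [/\ [/\ 0 <= x <= 1,
          (forall i u, 0 <= y i u <= 1),
          (forall i j u v, ER i j -> 0 <= z i j u v <= 1),
          (forall tau u, u \in VSt tau -> 0 <= an tau u) &
          (forall u v, ES u v -> 0 <= ae u v)],
      [/\ (forall i, \sum_(u in Vallow i) y i u = x),
      (forall i u, u \notin Vallow i -> y i u = 0),
      (forall i j, ER i j -> forall u,
          \sum_(v | ES u v) z i j u v - \sum_(v | ES v u) z i j v u
          = y i u - y j u) &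
      (forall i j u v, ER i j -> ~~ Eallow i j u v -> z i j u v = 0)],
      (forall u v, ES u v ->
          ae u v = \sum_(p : VR * VR | ER p.1 p.2) de p.1 p.2 * z p.1 p.2 u v) &
      (forall tau u, u \in VSt tau ->
          an tau u = \sum_(i | typ i == tau) dn i * y i u)].
End LP.

(* Main.v *)
Require Import Defs.
From mathcomp Require Import all_boot all_order all_algebra ring lra.
Set Implicit Arguments. Unset Strict Implicit. Unset Printing Implicit Defensive.
Import Order.TTheory GRing.Theory Num.Theory.
Local Open Scope ring_scope.

Section Reach.
Variables (R : realFieldType) (V : finType) (E : rel V) (g : V -> V -> R)
  (a b : V -> R).
Hypotheses (g0 : forall u v, 0 <= g u v) (a0 : forall u, 0 <= a u)
  (b0 : forall u, 0 <= b u)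
  (cons : forall u, \sum_(v | E u v) g u v - \sum_(v | E v u) g v u = a u - b u).

Lemma reach u0 : 0 < a u0 ->
  exists2 v, 0 < b v & connect (fun p q => 0 < g p q) u0 v.
Proof.
move=> au0.
set e := (fun p q => 0 < g p q).
case: (boolP [exists v, (0 < b v) && connect e u0 v]).
  by case/existsP=> v /andP[]; exists v.
rewrite negb_exists => /forallP nb.
pose S := [set w | connect e u0 w].
have hS w : w \in S -> b w = 0.
  rewrite inE => cw; have := nb w; rewrite cw andbT => /negbTE bw.
  by apply/eqP; rewrite eq_le b0 andbT leNgt bw.
have clS w v : w \in S -> 0 < g w v -> v \in S.
  rewrite !inE => cw gv; apply: connect_trans cw _; exact: connect1.
have u0S : u0 \in S by rewrite inE connect0.
have H1 : \sum_(w in S) (a w - b w) > 0.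
  rewrite (eq_bigr a); last by move=> w /hS ->; rewrite subr0.
  rewrite (bigD1 u0) //=; apply: (lt_le_trans au0).
  by rewrite lerDl; apply: sumr_ge0.
have H2 : \sum_(w in S) (a w - b w) <= 0.
  rewrite -(eq_bigr _ (fun w _ => cons w)) sumrB subr_le0.
  have -> : \sum_(w in S) \sum_(v | E w v) g w v =
            \sum_(w in S) \sum_(v in S) (if E w v then g w v else 0).
    apply: eq_bigr => w wS; rewrite big_mkcond /= [RHS]big_mkcond /=.
    apply: eq_bigr => v _; case: ifP => // Ewv; case: ifP => // vS.
    by apply/eqP; rewrite eq_le g0 andbT leNgt; apply/negP => /(clS _ _ wS); rewrite vS.
  apply: le_trans (_ : \sum_(w in S) \sum_(v in S) (if E v w then g v w else 0) <= _).
    by rewrite exchange_big /=.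
  apply: ler_sum => w _; rewrite [X in _ <= X]big_mkcond /= [X in X <= _]big_mkcond /=.
  apply: ler_sum => v _; case: ifP => // _; case: ifP => //.
by have := lt_le_trans H1 H2; rewrite ltxx.
Qed.
End Reach.

Lemma connect_upath (V : finType) (e : rel V) u v : connect e u v ->
  exists p, [/\ path e u p, last u p = v & uniq (u :: p)].
Proof.
move/connectP=> [p pp ->]; case/shortenP: pp => p' pp' up' _.
by exists p'.
Qed.

Section TreeMap.
Variables (VR VS : finType) (ER : rel VR).
Variables (L : Type) (l0 : L) (ok : VR -> VS -> Prop) (good : VR -> VR -> VS -> L -> VS -> Prop).
Hypothesis tree : underlying_tree ER.
Hypothesis fwd : forall i j u, ER i j -> ok i u -> exists v p, ok j v /\ good i j u p v.
Hypothesis bwd : forall i j v, ER i j -> ok j v -> exists u p, ok i u /\ good i j u p v.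

Definition inS (S : {set VR}) : rel VR :=
  fun p q => [&& p \in S, q \in S & undirected ER p q].

Lemma noloop a : ~~ ER a a.
Proof.
apply/negP => Ea; case: tree => _ _ /(_ a a Ea); by rewrite connect0.
Qed.

Lemma um_sym c d : symmetric (undirected_minus ER c d).
Proof. by move=> p q; rewrite /undirected_minus orbC. Qed.

Lemma bridge_contra (S : {set VR}) a b c d c' d' s :
  a \in S -> b \notin S -> s \in S ->
  (forall p q, p \in S -> q \in S -> connect (inS S) p q) ->
  ER c d -> ((c, d) = (a, b) \/ (c, d) = (b, a)) ->
  ER c' d' -> (c', d') != (c, d) -> ((c', d') = (s, b) \/ (c', d') = (b, s)) ->
  False.
Proof.
move=> aS bS sS conn Ecd hcd Ec'd' neq hc'd'.
case: tree => _ _ /(_ c d Ecd) /negP; apply.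
set e := undirected_minus ER c d.
have bne p : p \in S -> p != b by move=> pS; apply/eqP=> pb; move: bS; rewrite -pb pS.
have eas : connect e a s.
  apply: connect_sub (conn _ _ aS sS) => p q /and3P[pS qS /orP upq]; apply: connect1.
  rewrite /e /undirected_minus.
  have n1 : (p, q) != (c, d).
    apply/eqP=> [[pc qd]]; case: hcd => [[_ db]|[cb _]].
      by move: (bne q qS); rewrite qd db eqxx.
    by move: (bne p pS); rewrite pc cb eqxx.
  have n2 : (q, p) != (c, d).
    apply/eqP=> [[qc pd]]; case: hcd => [[_ db]|[cb _]].
      by move: (bne p pS); rewrite pd db eqxx.
    by move: (bne q qS); rewrite qc cb eqxx.
  by rewrite n1 n2 !andbT; apply/orP.
have esb : e s b.
  rewrite /e /undirected_minus; case: hc'd' => [[Hc Hd]|[Hc Hd]]; rewrite Hc Hd in Ec'd' neq.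
    by rewrite Ec'd' neq.
  by rewrite Ec'd' neq orbT.
have eab : connect e a b by apply: connect_trans eas (connect1 esb).
have csym : connect_sym e by apply: sym_connect_sym; exact: um_sym.
by case: hcd => [[-> ->]|[-> ->]] //; rewrite csym.
Qed.

Lemma tree_map : (exists i0 u0, ok i0 u0) ->
  exists (m : VR -> VS) (P : VR -> VR -> L),
    (forall i, ok i (m i)) /\ (forall i j, ER i j -> good i j (m i) (P i j) (m j)).
Proof.
move=> [i0 [u0 ok0]].
have conn : forall i j, connect (undirected ER) i j by case: tree.
have main : forall k, (0 < k <= #|VR|)%N -> exists (S : {set VR}) (m : VR -> VS)
    (P : VR -> VR -> L),
    [/\ #|S| = k, (forall p q, p \in S -> q \in S -> connect (inS S) p q),
        (forall i, i \in S -> ok i (m i)) &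
        (forall i j, i \in S -> j \in S -> ER i j -> good i j (m i) (P i j) (m j))].
  elim=> [//|k IH] /andP[_ kle].
  case: k IH kle => [|k] IH kle.
    exists [set i0], (fun _ => u0), (fun _ _ => l0); split.
    - exact: cards1.
    - by move=> p q; rewrite !inE => /eqP-> /eqP->; exact: connect0.
    - by move=> i; rewrite inE => /eqP->.
    - by move=> i j; rewrite !inE => /eqP-> /eqP->; rewrite (negbTE (noloop i0)).
  have [//|S [m [P [cS connS okS goodS]]]] := IH.
    by apply: ltnW.
  have [j _ jS] : exists2 j, j \in [set: VR] & j \notin S.
    apply/subsetPn; apply/negP => /subset_leq_card; rewrite cardsT cS.
    by rewrite leqNgt kle.
  have [i iS] : exists i, i \in S by apply/card_gt0P; rewrite cS.
  have [a [b [aS bS uab]]] : exists a b, [/\ a \in S, b \notin S & undirected ER a b].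
    case: (boolP [exists a, exists b, [&& a \in S, b \notin S & undirected ER a b]]).
      by case/existsP=> a /existsP[b /and3P[? ? ?]]; exists a, b.
    rewrite negb_exists => /forallP nab.
    have : closed (undirected ER) S.
      apply: intro_closed; first by apply: sym_connect_sym => p q; rewrite /undirected orbC.
      move=> p q upq pS; apply/negPn/negP => qS.
      by have := nab p; rewrite negb_exists => /forallP /(_ q); rewrite pS qS upq.
    by move/closed_connect/(_ i j (conn i j)); rewrite iS (negbTE jS).
  have bne p : p \in S -> p != b by move=> pS; apply/eqP=> pb; move: bS; rewrite -pb pS.
  have conn' : forall p q, p \in b |: S -> q \in b |: S -> connect (inS (b |: S)) p q.
    have sub : forall p q, p \in S -> q \in S -> connect (inS (b |: S)) p q.
      move=> p q pS qS; apply: connect_sub (connS p q pS qS) => p' q' /and3P[p'S q'S u].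
      by apply: connect1; rewrite /inS !inE p'S q'S u !orbT.
    have eab : inS (b |: S) a b by rewrite /inS !inE aS eqxx orbT uab.
    have eba : inS (b |: S) b a by rewrite /inS !inE aS eqxx orbT /=; move: uab; rewrite /undirected orbC.
    have pa : forall p, p \in b |: S -> connect (inS (b |: S)) p a.
      move=> p; rewrite !inE => /orP[/eqP->|pS]; first exact: connect1.
      exact: sub.
    have ap : forall p, p \in b |: S -> connect (inS (b |: S)) a p.
      move=> p; rewrite !inE => /orP[/eqP->|pS]; first exact: connect1.
      exact: sub.
    by move=> p q pS qS; apply: connect_trans (pa p pS) (ap q qS).
  case/orP: uab => [Eab|Eba].
    have [v [p [okv gp]]] := fwd Eab (okS a aS).
    exists (b |: S), (fun t => if t == b then v else m t),
      (fun s t => if (s == a) && (t == b) then p else P s t); split.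
    - by rewrite cardsU1 bS cS.
    - exact: conn'.
    - move=> t; rewrite !inE => /orP[/eqP->|tS]; first by rewrite eqxx.
      by rewrite (negbTE (bne t tS)); apply: okS.
    - move=> s t; rewrite !inE => /orP[/eqP->|sS] /orP[/eqP->|tS] Est.
      + by move: Est; rewrite (negbTE (noloop b)).
      + exfalso; apply: (bridge_contra aS bS tS connS Eab (or_introl erefl) Est _ (or_intror erefl)).
        by apply/eqP=> [[ba _]]; move: (bne a aS); rewrite ba eqxx.
      + case: (eqVneq s a) => [->|sa].
          by rewrite !eqxx (negbTE (bne a aS)).
        exfalso; apply: (bridge_contra aS bS sS connS Eab (or_introl erefl) Est _ (or_introl erefl)).
        by apply/eqP=> -[sa']; rewrite sa' eqxx in sa.
      + by rewrite (negbTE (bne s sS)) (negbTE (bne t tS)) andbF; apply: goodS.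
  have [u [p [oku gp]]] := bwd Eba (okS a aS).
  exists (b |: S), (fun t => if t == b then u else m t),
    (fun s t => if (s == b) && (t == a) then p else P s t); split.
  - by rewrite cardsU1 bS cS.
  - exact: conn'.
  - move=> t; rewrite !inE => /orP[/eqP->|tS]; first by rewrite eqxx.
    by rewrite (negbTE (bne t tS)); apply: okS.
  - move=> s t; rewrite !inE => /orP[/eqP->|sS] /orP[/eqP->|tS] Est.
    + by move: Est; rewrite (negbTE (noloop b)).
    + case: (eqVneq t a) => [->|ta].
        by rewrite !eqxx (negbTE (bne a aS)).
      exfalso; apply: (bridge_contra aS bS tS connS Eba (or_intror erefl) Est _ (or_intror erefl)).
      by apply/eqP=> -[ta']; rewrite ta' eqxx in ta.
    + exfalso; apply: (bridge_contra aS bS sS connS Eba (or_intror erefl) Est _ (or_introl erefl)).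
      by apply/eqP=> [[sb _]]; move: (bne s sS); rewrite sb eqxx.
    + by rewrite (negbTE (bne s sS)) (negbTE (bne t tS)); apply: goodS.
have [|S [m [P [cS _ okS goodS]]]] := main #|VR|.
  by rewrite leqnn andbT; apply/card_gt0P; exists i0.
have ST : S = setT by apply/eqP; rewrite eqEcard subsetT cardsT cS leqnn.
exists m, P; split => [i|i j]; first by apply: okS; rewrite ST inE.
by apply: goodS; rewrite ST inE.
Qed.
End TreeMap.

Section PE.
Variable VS : finType.

Lemma mem_zip1 (s p : seq VS) a b : (a, b) \in zip s p -> a \in s.
Proof.
elim: s p => [|x s IH] [|y p] //=; rewrite !in_cons => /orP[/eqP[-> _]|/IH ->].
  by rewrite eqxx.
by rewrite orbT.
Qed.

Lemma pe_cons (s t : VS) p e :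
  (e \in path_edges s (t :: p)) = (e == (s, t)) || (e \in path_edges t p).
Proof. by rewrite /path_edges !inE. Qed.

Lemma pe_nil (s : VS) e : (e \in path_edges s [::]) = false.
Proof. by rewrite /path_edges inE. Qed.

Lemma pe_path (e : rel VS) s p u v : path e s p -> (u, v) \in path_edges s p -> e u v.
Proof.
elim: p s => [|t p IH] s; first by rewrite pe_nil.
rewrite /= pe_cons => /andP[est pp] /orP[/eqP[-> ->] //|]; exact: IH.
Qed.

Lemma pe_empty (s : VS) p : uniq (s :: p) -> (path_edges s p == set0) = (s == last s p).
Proof.
case: p => [|t p] /=; first by move=> _; rewrite eqxx; apply/eqP/setP=> e; rewrite pe_nil ?inE.
move=> /andP[sn _].
have -> : s == last t p = false.
  apply/negbTE; apply/eqP=> sl; move: sn; rewrite sl mem_last.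
  by [].
apply/negbTE/set0Pn; exists (s, t); by rewrite pe_cons eqxx.
Qed.

Variable R : realFieldType.
Variable ES : rel VS.

Lemma pe_flow s p : path ES s p -> uniq (s :: p) -> forall u,
  \sum_(v | ES u v) ((u, v) \in path_edges s p)%:R
  - \sum_(v | ES v u) ((v, u) \in path_edges s p)%:R
  = (u == s)%:R - (u == last s p)%:R :> R.
Proof.
elim: p s => [|t p IH] s.
  by move=> _ _ u; rewrite !big1 ?subrr // => v _; rewrite pe_nil.
move=> /= /andP[Est pp] /andP[sn up] u.
have nin v w : ((v, w) \in path_edges t p) -> v != s.
  rewrite /path_edges inE => /mem_zip1 vi; apply/eqP=> vs; move: sn; by rewrite -vs vi.
have split1 v w : ((v, w) \in path_edges s (t :: p))%:R =
    ((v, w) == (s, t))%:R + ((v, w) \in path_edges t p)%:R :> R.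
  rewrite pe_cons; case: eqP => [[-> _]|_] /=; last by rewrite add0r.
  have /negbTE -> : (s, w) \notin path_edges t p by apply/negP => /nin; rewrite eqxx.
  by rewrite addr0.
rewrite (eq_bigr _ (fun v _ => split1 u v)) (eq_bigr _ (fun v _ => split1 v u)) /=.
rewrite !big_split /=.
have H := IH t pp up u.
have -> : \sum_(v | ES u v) ((u, v) == (s, t))%:R = (u == s)%:R :> R.
  case: (eqVneq u s) => [->|us].
    rewrite (bigD1 t) //= eqxx big1 ?addr0 // => v /andP[_ vt].
    by rewrite xpair_eqE eqxx (negbTE vt).
  by rewrite big1 // => v _; rewrite xpair_eqE (negbTE us).
have -> : \sum_(v | ES v u) ((v, u) == (s, t))%:R = (u == t)%:R :> R.
  case: (eqVneq u t) => [->|ut].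
    rewrite (bigD1 s) //= eqxx big1 ?addr0 // => v /andP[_ vs].
    by rewrite xpair_eqE (negbTE vs).
  by rewrite big1 // => v _; rewrite xpair_eqE (negbTE ut) andbF.
by rewrite opprD addrACA H addrA subrK.
Qed.
End PE.

Section Main.
Variables (R : realFieldType) (VS VR : finType) (ES : rel VS) (ER : rel VR)
  (Vallow : VR -> {set VS}) (Eallow : VR -> VR -> rel VS).
Hypothesis EallowES : forall i j u v, Eallow i j u v -> ES u v.
Hypothesis tree : underlying_tree ER.

Definition Inv (x : R) (y : VR -> VS -> R) (z : VR -> VR -> VS -> VS -> R) :=
  (forall i u, 0 <= y i u) /\ (forall i j u v, ER i j -> 0 <= z i j u v) /\
  (forall i, \sum_u y i u = x) /\ (forall i u, 0 < y i u -> u \in Vallow i) /\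
  (forall i j, ER i j -> forall u,
     \sum_(v | ES u v) z i j u v - \sum_(v | ES v u) z i j v u = y i u - y j u) /\
  (forall i j u v, ER i j -> 0 < z i j u v -> Eallow i j u v).

Definition mu (y : VR -> VS -> R) (z : VR -> VR -> VS -> VS -> R) : nat :=
  addn #|[set p : VR * VS | 0 < y p.1 p.2]|
   #|[set q : VR * VR * VS * VS | ER q.1.1.1 q.1.1.2 && (0 < z q.1.1.1 q.1.1.2 q.1.2 q.2)]|.

Lemma step x y z : Inv x y z -> 0 < x ->
  exists (f : R) (M : mapping VS VR) y' z',
   [/\ 0 < f, valid_mapping ER Vallow Eallow M, Inv (x - f) y' z', (mu y' z' < mu y z)%N &
     (forall i u, y i u = y' i u + f * (mV M i == u)%:R) /\
     (forall i j u v, ER i j -> z i j u v = z' i j u v + f * ((u, v) \in mE M i j)%:R)].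
Proof.
move=> [y0 [z0 [ysum [yV [cons zE]]]]] x0.
have [i0 _] : exists i0, i0 \in VR.
  by case: tree => /card_gt0P [i0 _] _ _; exists i0.
have [u0 yu0] : exists u0, 0 < y i0 u0.
  have : \sum_u y i0 u <> 0 by rewrite ysum => x00; move: x0; rewrite x00 ltxx.
  by case/psumr_neq0P => [u _|u /andP[_ ?]]; [exact: y0 | exists u].
pose good i j u (p : seq VS) v :=
  [/\ path (fun a b => 0 < z i j a b) u p, last u p = v & uniq (u :: p)].
have fwd : forall i j u, ER i j -> 0 < y i u -> exists v p, 0 < y j v /\ good i j u p v.
  move=> i j u Eij yiu.
  have [v yjv c] := reach (fun a b => z0 i j a b Eij) (y0 i) (y0 j) (cons _ _ Eij) yiu.
  have [p [pp lp up]] := connect_upath c.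
  by exists v, p; split => //; split.
have bwd : forall i j v, ER i j -> 0 < y j v -> exists u p, 0 < y i u /\ good i j u p v.
  move=> i j v Eij yjv.
  have cons' : forall u, \sum_(w | ES w u) z i j w u - \sum_(w | ES u w) z i j u w
      = y j u - y i u.
    by move=> u; rewrite -opprB cons // opprB.
  have [u yiu c] := reach (g := fun p q => z i j q p) (E := fun p q => ES q p)
    (fun p q => z0 _ _ _ _ Eij) (y0 j) (y0 i) cons' yjv.
  have c' : connect (fun a b => 0 < z i j a b) u v.
    by have := connect_rev (fun a b => 0 < z i j a b) v u; rewrite /= => <-.
  have [p [pp lp up]] := connect_upath c'.
  by exists u, p; split => //; split.
have [m [P [okm goodm]]] := tree_map [::] tree fwd bwd (ex_intro _ i0 (ex_intro _ u0 yu0)).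
pose M := Mapping m (fun i j => path_edges (m i) (P i j)).
have pES : forall i j, ER i j -> path ES (m i) (P i j).
  move=> i j Eij; have [pp _ _] := goodm i j Eij.
  by apply: (sub_path _ pp) => a b /(zE _ _ _ _ Eij) /EallowES.
have valid : valid_mapping ER Vallow Eallow M.
  split => [i|i j Eij|i j Eij] /=.
  - exact: yV (okm i).
  - exists (P i j); have [pp lp up] := goodm i j Eij; split => //.
    by apply: (sub_path _ pp) => a b /(zE _ _ _ _ Eij).
  - by have [pp lp up] := goodm i j Eij; rewrite pe_empty // lp.
have zpos : forall i j u v, ER i j -> (u, v) \in path_edges (m i) (P i j) -> 0 < z i j u v.
  by move=> i j u v Eij; have [pp _ _] := goodm i j Eij; apply: pe_path pp.
have [f [f0 fy fz fhit]] : exists f, [/\ 0 < f, (forall i, f <= y i (m i)),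
    (forall i j u v, ER i j -> (u, v) \in path_edges (m i) (P i j) -> f <= z i j u v) &
    (exists i, f = y i (m i)) \/
    (exists i j u v, [/\ ER i j, (u, v) \in path_edges (m i) (P i j) & f = z i j u v])].
  pose Et := (VR + (VR * VR * VS * VS))%type.
  pose g (e : Et) := match e with inl i => y i (m i)
                     | inr q => z q.1.1.1 q.1.1.2 q.1.2 q.2 end.
  pose Pe (e : Et) := match e with inl _ => true
     | inr q => ER q.1.1.1 q.1.1.2 && ((q.1.2, q.2) \in path_edges (m q.1.1.1) (P q.1.1.1 q.1.1.2)) end.
  have [e1 Pe1 e1min] : exists2 e1, Pe e1 & forall e, Pe e -> g e1 <= g e.
    by case: (@arg_minP _ _ Et (inl i0) Pe g isT) => e1 Pe1 H; exists e1.
  exists (g e1); split.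
  - case: e1 Pe1 {e1min} => [i|[[[i j] u] v]] /=; first by rewrite okm.
    by case/andP; apply: zpos.
  - by move=> i; apply: (e1min (inl i)).
  - by move=> i j u v Eij pe; apply: (e1min (inr (i, j, u, v))); rewrite /= Eij pe.
  - case: e1 Pe1 {e1min} => [i|[[[i j] u] v]] /=; first by left; exists i.
    by case/andP => Eij pe; right; exists i, j, u, v.
pose y' i u := y i u - f * (m i == u)%:R.
pose z' i j u v := z i j u v - f * ((u, v) \in path_edges (m i) (P i j))%:R.
have y'le i u : y' i u <= y i u.
  by rewrite /y' lerBlDr lerDl mulr_ge0 // ltW.
have z'le i j u v : z' i j u v <= z i j u v.
  by rewrite /z' lerBlDr lerDl mulr_ge0 // ltW.
exists f, M, y', z'; split => //.
- split; [|split; [|split; [|split; [|split]]]].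
  + move=> i u; rewrite /y'; case: (eqVneq (m i) u) => [<-|_] /=.
      by rewrite mulr1 subr_ge0.
    by rewrite mulr0 subr0.
  + move=> i j u v Eij; rewrite /z'; case: (boolP ((u, v) \in path_edges (m i) (P i j))) => pe /=.
      by rewrite mulr1 subr_ge0 fz.
    by rewrite mulr0 subr0 z0.
  + move=> i; rewrite /y' sumrB ysum -mulr_sumr.
    rewrite (bigD1 (m i)) //= eqxx big1 ?addr0 ?mulr1 // => u /negbTE.
    by rewrite eq_sym => ->.
  + by move=> i u /lt_le_trans /(_ (y'le i u)); apply: yV.
  + move=> i j Eij u; rewrite /z' /y' !sumrB -!mulr_sumr.
    have H1 := cons i j Eij u.
    have H2 := pe_flow R (pES i j Eij) (let: And3 _ _ up := goodm i j Eij in up) u.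
    have [_ lp _] := goodm i j Eij; rewrite lp in H2.
    rewrite [m i == u]eq_sym [m j == u]eq_sym.
    have E (a b c d : R) : (a - b) - (c - d) = (a - c) - (b - d).
      by ring.
    by rewrite E H1 -mulrBr H2 [RHS]E -mulrBr.
  + by move=> i j u v Eij /lt_le_trans /(_ (z'le i j u v)); apply: zE.
- rewrite /mu -addSn.
  set A' := [set p | _]; set B' := [set p | _].
  set A := [set q | _]; set B := [set q | _].
  have sA : A' \subset A.
    by apply/subsetP => p; rewrite !inE => /lt_le_trans; apply; apply: y'le.
  have sB : B' \subset B.
    apply/subsetP => q; rewrite !inE => /andP[-> /lt_le_trans h] /=; apply: h.
    exact: z'le.
  case: fhit => [[i fi]|[i [j [u [v [Eij pe fzv]]]]]].
    apply: leq_add (subset_leq_card sB); apply: proper_card; apply/properP.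
    split=> //; exists (i, m i); rewrite !inE /= ?okm //.
    by rewrite /y' eqxx mulr1 -fi subrr ltxx.
  rewrite addSnnS; apply: leq_add (subset_leq_card sA) _; apply: proper_card; apply/properP.
  split=> //; exists (i, j, u, v); rewrite !inE /= Eij ?zpos //=.
  by rewrite /z' pe mulr1 -fzv subrr ltxx.
- split => [i u|i j u v Eij]; first by rewrite /y' subrK.
  by rewrite /z' subrK.
Qed.
End Main.

Fixpoint allP {A : Type} (P : A -> Prop) (s : seq A) : Prop :=
  if s is q :: s' then P q /\ allP P s' else True.

Lemma allP_nth {A : Type} (P : A -> Prop) s : allP P s ->
  forall d k, (k < size s)%N -> P (nth d s k).
Proof.
elim: s => [//|q s IH] /= [Pq As] d [|k] //= lt; exact: IH.
Qed.

Lemma sum_ind (R : realFieldType) (I J : finType) (P : pred I) (Q : J -> pred I)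
  (F : I -> R) (f : J -> R) (c : I -> R) :
  (forall i, P i -> 0 <= F i) ->
  (forall i, P i -> \sum_j f j * (Q j i)%:R <= c i) ->
  \sum_j f j * \sum_(i | P i && Q j i) F i <= \sum_(i | P i) F i * c i.
Proof.
move=> F0 Hc.
have -> : \sum_j f j * \sum_(i | P i && Q j i) F i =
          \sum_(i | P i) F i * \sum_j f j * (Q j i)%:R.
  under eq_bigr => j _ do rewrite big_mkcondr mulr_sumr.
  rewrite exchange_big /=; apply: eq_bigr => i Pi; rewrite mulr_sumr.
  by apply: eq_bigr => j _; case: (Q j i) => /=; ring.
by apply: ler_sum => i Pi; apply: ler_wpM2l; [exact: F0 | exact: Hc].
Qed.

Section Dec.
Variables (R : realFieldType) (VS VR : finType) (ES : rel VS) (ER : rel VR)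
  (Vallow : VR -> {set VS}) (Eallow : VR -> VR -> rel VS).
Hypothesis EallowES : forall i j u v, Eallow i j u v -> ES u v.
Hypothesis tree : underlying_tree ER.

Definition decomp (s : seq (R * mapping VS VR)) x y z :=
  [/\ allP (fun q => 0 < q.1 /\ valid_mapping ER Vallow Eallow q.2) s,
      x = \sum_(q <- s) q.1,
      (forall i u, \sum_(q <- s) q.1 * (mV q.2 i == u)%:R <= y i u) &
      (forall i j u v, ER i j ->
          \sum_(q <- s) q.1 * ((u, v) \in mE q.2 i j)%:R <= z i j u v)].

Lemma decompose x y z : Inv ES ER Vallow Eallow x y z -> exists s, decomp s x y z.
Proof.
move=> inv; move: (ltnSn (mu ER y z)); move: {2}(mu ER y z).+1 => N.
elim: N x y z inv => [//|N IH] x y z inv ltN.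
have [y0 [z0 [ysum _]]] := inv.
have [i0 _] : exists i0, i0 \in VR.
  by case: tree => /card_gt0P [i0 _] _ _; exists i0.
case: (eqVneq x 0) => [->|xn0].
  exists [::]; split => //=; first by rewrite big_nil.
    by move=> i u; rewrite big_nil y0.
  by move=> i j u v Eij; rewrite big_nil z0.
have x0 : 0 < x.
  by rewrite lt_def xn0 -(ysum i0) sumr_ge0 // => u _; apply: y0.
have [f [M [y' [z' [f0 vM inv' lt [ye ze]]]]]] := step EallowES tree inv x0.
have [|s [As sx sy sz]] := IH _ _ _ inv'.
  by apply: leq_trans lt _; rewrite -ltnS.
exists ((f, M) :: s); split => /=.
- by split.
- by rewrite big_cons -sx addrC subrK.
- by move=> i u; rewrite big_cons (ye i u) addrC lerD2r.
- by move=> i j u v Eij; rewrite big_cons (ze i j u v Eij) addrC lerD2r; apply: sz.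
Qed.
End Dec.
Unset Implicit Arguments.
Theorem lemma6 (R : realFieldType) (VS VR T : finType) (ES : rel VS)
    (VSt : T -> {set VS}) (ER : rel VR) (typ : VR -> T)
    (dn : VR -> R) (de : VR -> VR -> R)
    (Vallow : VR -> {set VS}) (Eallow : VR -> VR -> rel VS)
    (x : R) (y : VR -> VS -> R) (z : VR -> VR -> VS -> VS -> R)
    (an : T -> VS -> R) (ae : VS -> VS -> R) :
  (forall i, 0 <= dn i) ->
  (forall i j, ER i j -> 0 <= de i j) ->
  (forall i, Vallow i \subset VSt (typ i)) ->
  (forall i j u v, Eallow i j u v -> ES u v) ->
  underlying_tree ER ->
  lp_feasible ES VSt ER typ dn de Vallow Eallow x y z an ae ->
  exists (n : nat) (f : 'I_n -> R) (m : 'I_n -> mapping VS VR),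
    [/\ (forall k, 0 < f k /\ valid_mapping ER Vallow Eallow (m k)),
        x = \sum_(k < n) f k,
        (forall tau u, u \in VSt tau ->
            \sum_(k < n) f k * alloc_node typ dn (m k) tau u <= an tau u) &
        (forall u v, ES u v ->
            \sum_(k < n) f k * alloc_edge ER de (m k) u v <= ae u v)].
Proof.
move=> dn0 de0 _ EES tree [[_ y01 z01 _ _] [ysum yout cons zout] aeE anE].
have inv : Inv ES ER Vallow Eallow x y z.
  split; [|split; [|split; [|split; [|split]]]].
  - by move=> i u; case/andP: (y01 i u).
  - by move=> i j u v Eij; case/andP: (z01 i j u v Eij).
  - move=> i; rewrite -(ysum i) [RHS]big_mkcond /=; apply: eq_bigr => u _.
    by case: ifP => // /negbT /yout.
  - move=> i u yp; apply/negPn/negP => /yout yz; by rewrite yz ltxx in yp.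
  - exact: cons.
  - move=> i j u v Eij zp; apply/negPn/negP => /(zout _ _ _ _ Eij) zz.
    by rewrite zz ltxx in zp.
have [s [As sx sy sz]] := decompose EES tree inv.
pose t := in_tuple s.
exists (size s), (fun k => (tnth t k).1), (fun k => (tnth t k).2); split.
- move=> k; rewrite (tnth_nth (tnth t k)).
  exact: (allP_nth As _ (ltn_ord k)).
- by rewrite sx big_tnth.
- move=> tau u uV; rewrite anE //; apply: sum_ind => // i _.
  by have := sy i u; rewrite big_tnth.
- move=> u v Euv; rewrite aeE //; apply: sum_ind => [p /de0 //|p Ep].
  by have := sz p.1 p.2 u v Ep; rewrite big_tnth.
Qed.
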